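(* For all $n,m,k\in\mathbb{N}$, \[ \sum_{i=0}^{k}\frac{1}{\binom{n}{i}}=\frac{2^{m}(n+1)}{n+m+1}\sum_{i=0}^{k}\frac{1}{\binom{n+m}{i}}+\sum_{j=1}^{m}\frac{2^{j-1}(n+1)}{n+j+1}\left(\frac{1}{\binom{n+j}{k+1}}-1\right), \] where $k\le n$ so that all binomial coefficients in denominators are nonzero.
   Context: Empty sums are $0$. *)

(* Defs.v *)
From HB Require Import structures.
From mathcomp Require Import all_boot all_order all_algebra.

(* Main.v *)
Require Import Defs.
From HB Require Import structures.
From mathcomp Require Import all_boot all_order all_algebra.
From mathcomp Require Import ring lra zify.
Import GRing.Theory Num.Theory.
Local Open Scope ring_scope.

Lemma step_pt n i : (i <= n)%N -> ('C(n,i)%:R:rat)^-1 =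
  (n.+1)%:R/(n.+2)%:R * (('C(n.+1,i)%:R:rat)^-1 + ('C(n.+1,i.+1)%:R:rat)^-1).
Proof.
move=> hi.
have h1 := mul_bin_down n.+1 i.
have h2 := mul_bin_diag n.+1 i.
have hd : (n.+1 = (n.+1 - i) + i)%N by rewrite subnK // ltnW.
move: (n.+1 - i)%N hd h1 => d hd h1.
have d0 : (0 < d)%N by lia.
have c0 : (0 < 'C(n,i))%N by rewrite bin_gt0.
have a0 : (0 < 'C(n.+1,i))%N by rewrite bin_gt0 ltnW.
have b0 : (0 < 'C(n.+1,i.+1))%N by rewrite bin_gt0.
move: h1 h2; rewrite /= => h1 h2.
have e1 : (n.+1%:R * 'C(n,i)%:R : rat) = d%:R * 'C(n.+1,i)%:R by rewrite -!natrM h1.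
have e2 : (n.+1%:R * 'C(n,i)%:R : rat) = i.+1%:R * 'C(n.+1,i.+1)%:R by rewrite -!natrM h2.
have hn2 : (n.+2%:R : rat) = d%:R + i.+1%:R by rewrite -natrD; congr (_%:R); lia.
have hn1 : (n.+1%:R : rat) = d%:R + i%:R by rewrite -natrD -hd.
have hc : (0:rat) < 'C(n,i)%:R by rewrite ltr0n.
have ha : (0:rat) < 'C(n.+1,i)%:R by rewrite ltr0n.
have hb : (0:rat) < 'C(n.+1,i.+1)%:R by rewrite ltr0n.
have hD : (0 : rat) < d%:R by rewrite ltr0n.
have hI : (0:rat) < i.+1%:R by rewrite ltr0n.
rewrite hn2.
move: e1 e2 hc ha hb hD hI.
move: ('C(n,i)%:R : rat) ('C(n.+1,i)%:R : rat) ('C(n.+1,i.+1)%:R : rat) (n.+1%:R : rat) (d%:R : rat) (i.+1%:R : rat).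
move=> c a b N D I e1 e2 hc ha hb hD hI.
have D0 : D != 0 := lt0r_neq0 hD.
have I0 : I != 0 := lt0r_neq0 hI.
have C0 : c != 0 := lt0r_neq0 hc.
have -> : a = N * c / D by rewrite e1 mulrAC divff ?mul1r.
have -> : b = N * c / I by rewrite e2 mulrAC divff ?mul1r.
have N0 : N != 0.
  apply/eqP=> N0; move: e1; rewrite N0 mul0r => /esym/eqP; by rewrite mulf_eq0 (negPf D0) (negPf (lt0r_neq0 ha)).
field.
by rewrite I0 C0 N0 D0 lt0r_neq0 // addr_gt0.
Qed.

Definition S n k := \sum_(0 <= i < k.+1) ('C(n, i)%:R : rat)^-1.

Lemma step n k : (k <= n)%N -> S n k =
  2 * n.+1%:R / n.+2%:R * S n.+1 k + n.+1%:R / n.+2%:R * (('C(n.+1, k.+1)%:R : rat)^-1 - 1).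
Proof.
rewrite /S; elim: k => [|k IH] hk.
  rewrite !big_nat1 !bin0 bin1.
  have h : (n.+2%:R : rat) != 0 by rewrite pnatr_eq0.
  have h' : (n.+1%:R : rat) != 0 by rewrite pnatr_eq0.
  rewrite invr1 -[n.+2]addn1 natrD; field.
  by rewrite nat1r natr1 h h'.
have R F : \sum_(0 <= i < k.+2) F i = \sum_(0 <= i < k.+1) F i + F k.+1 :> rat by rewrite big_nat_recr.
rewrite !R.
rewrite IH; last exact: ltnW.
rewrite (step_pt n k.+1) //.
move: (\sum_(0 <= i < k.+1) ('C(n.+1, i)%:R : rat)^-1) (('C(n.+1, k.+1)%:R : rat)^-1) (('C(n.+1, k.+2)%:R : rat)^-1) (n.+1%:R : rat) ((n.+2%:R : rat)^-1) => x y z w v.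
have E (x' y' z' w' v' : rat) : 2 * w' * v' * x' + w' * v' * (y' - 1) + w' * v' * (y' + z') =
  2 * w' * v' * (x' + y') + w' * v' * (z' - 1) by ring.
exact: E.
Qed.

Theorem mainTheorem17 (n m k : nat) (hk : (k <= n)%N) :
  \sum_(0 <= i < k.+1) ('C(n, i)%:R : rat)^-1 =
  (2 ^+ m * (n.+1)%:R / (n + m).+1%:R) *
    \sum_(0 <= i < k.+1) ('C(n + m, i)%:R : rat)^-1
  + \sum_(1 <= j < m.+1)
      (2 ^+ j.-1 * (n.+1)%:R / (n + j).+1%:R) *
        (('C(n + j, k.+1)%:R : rat)^-1 - 1).
Proof.
rewrite -!/(S _ _).
elim: m => [|m IH].
  rewrite big_geq // addn0 expr0 mul1r divff ?pnatr_eq0 // mul1r addr0 //.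
rewrite big_nat_recr //= IH (step (n + m) k) ?(leq_trans hk) ?leq_addr //.
rewrite !addnS /=.
have h1 : ((n + m).+1%:R : rat) != 0 by rewrite pnatr_eq0.
have h2 : ((n + m).+2%:R : rat) != 0 by rewrite pnatr_eq0.
move: h1 h2; move: ((n + m).+1%:R : rat) ((n + m).+2%:R : rat) => A B hA hB.
rewrite exprS; field.
by rewrite hA hB !andbT pnatr_eq0 -lt0n bin_gt0 ltnS (leq_trans hk) ?leq_addr.
Qed.
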